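(* Let $X$ be a Banach lattice with order continuous norm and let $(S_\lambda)_{\lambda\in\Lambda}$ be a family of convex monotone semigroups on $X$ such that $\{S_\lambda(t)x:\lambda\in\Lambda\}$ is bounded above for all $x\in X$ and $t>0$. Assume that for every $t\ge 0$ there is a bounded operator $C(t)\colon X\to X$ with $J_\pi x\le C(t)x$ for all $\pi\in P_t$ and $x\in X$. Then the semigroup envelope $S=(S(t))_{t\ge0}$ of $(S_\lambda)_{\lambda\in\Lambda}$ exists, is a convex monotone semigroup, and is given by $S(t)x=\sup_{\pi\in P_t}J_\pi x$ for all $t\ge0$, $x\in X$. If moreover $C(t)x\to x$ as $t\downarrow 0$ for all $x\in X$ and $S_{\lambda_0}$ is a $C_0$-semigroup for some $\lambda_0\in\Lambda$, then $S$ is a $C_0$-semigroup. Moreover, if $S_\lambda$ is sublinear for all $\lambda\in\Lambda$, then $S$ is sublinear.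
   Context: A Banach lattice $X$ has order continuous norm if $\|x_\alpha\|\to 0$ for every net $x_\alpha\downarrow 0$ (then every nonempty subset bounded above has a supremum). An operator $T\colon X\to X$ is convex if $T(\lambda x+(1-\lambda)y)\le\lambda Tx+(1-\lambda)Ty$, monotone if $x\le y\Rightarrow Tx\le Ty$, positive homogeneous if $T(\lambda x)=\lambda Tx$ for $\lambda>0$, sublinear if convex and positive homogeneous, bounded if $\sup_{\|x\|\le r}\|Tx\|<\infty$ for all $r>0$. A semigroup on $X$ is a family $(S(t))_{t\ge0}$ of bounded operators $X\to X$ with $S(0)=\mathrm{id}$ and $S(t+s)=S(t)S(s)$; it is a $C_0$-semigroup if additionally $S(t)x\to x$ as $t\downarrow0$ for all $x$; it is convex/monotone/sublinear if every $S(t)$ is. For semigroups $S,T$ write $S\le T$ if $S(t)x\le T(t)x$ for all $t,x$. A semigroup $S$ is an upper bound of $(S_\lambda)$ if $S\ge S_\lambda$ for all $\lambda$, and the (upper) semigroup envelope is the smallest upper bound. Let $P$ be the set of finite sets $\pi\subset[0,\infty)$ with $0\in\pi$, and $P_t:=\{\pi\in P:\max\pi=t\}$. Define $J_hx:=\sup_{\lambda\in\Lambda}S_\lambda(h)x$ for $h>0$ (and $J_0=\mathrm{id}$), and for $\pi=\{t_0,\dots,t_m\}$ with $0=t_0<t_1<\dots<t_m$, $J_\pi x:=J_{t_1-t_0}\cdots J_{t_m-t_{m-1}}x$ ($J_{\{0\}}=\mathrm{id}$). *)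

(* Defs.v *)
From HB Require Import structures.
From mathcomp Require Import all_boot all_order all_algebra.
From mathcomp Require Import all_classical all_reals all_analysis.
Set Implicit Arguments. Unset Strict Implicit. Unset Printing Implicit Defensive.
Import Order.TTheory GRing.Theory Num.Theory.
Import numFieldNormedType.Exports.
Local Open Scope classical_set_scope.
Local Open Scope ring_scope.

Record banach_lattice (R : realType) (X : completeNormedModType R) := BanachLattice {
  ble : X -> X -> Prop;
  ble_refl : forall x, ble x x;
  ble_trans : forall x y z, ble x y -> ble y z -> ble x z;
  ble_anti : forall x y, ble x y -> ble y x -> x = y;
  ble_add : forall x y z, ble x y -> ble (x + z) (y + z);
  ble_scale : forall (a : R) x y, 0 <= a -> ble x y -> ble (a *: x) (a *: y);
  bjoin : X -> X -> X;
  bjoin_ubl : forall x y, ble x (bjoin x y);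
  bjoin_ubr : forall x y, ble y (bjoin x y);
  bjoin_least : forall x y z, ble x z -> ble y z -> ble (bjoin x y) z;
  (* lattice norm: |x| <= |y| implies ||x|| <= ||y||, with |x| = x v (-x) *)
  bnorm_mono : forall x y, ble (bjoin x (- x)) (bjoin y (- y)) -> `|x| <= `|y|
}.

Section BL.
Context {R : realType} {X : completeNormedModType R} (L : banach_lattice X).
Local Notation "x <=L y" := (ble L x y) (at level 70).

Definition is_ub (A : set X) (u : X) := forall a, A a -> a <=L u.
Definition bounded_above (A : set X) := exists u, is_ub A u.
Definition is_sup (A : set X) (s : X) :=
  is_ub A s /\ forall u, is_ub A u -> s <=L u.
Definition is_inf (A : set X) (s : X) :=
  (forall a, A a -> s <=L a) /\ forall u, (forall a, A a -> u <=L a) -> u <=L s.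

(* the supremum of A (chosen; meaningful when it exists, it is then unique) *)
Definition lsup (A : set X) : X := xget 0 [set s | is_sup A s].

Definition order_continuous := forall (I : Type) (ileq : I -> I -> Prop) (x : I -> X),
  (forall i, ileq i i) -> (forall i j k, ileq i j -> ileq j k -> ileq i k) ->
  inhabited I -> (forall i j, exists k, ileq i k /\ ileq j k) ->
  (forall i j, ileq i j -> x j <=L x i) ->
  is_inf (range x) 0 ->
  forall e : R, 0 < e -> exists i0, forall i, ileq i0 i -> `|x i| < e.

Definition bounded_op (T : X -> X) :=
  forall r : R, 0 < r -> exists M : R, forall x, `|x| <= r -> `|T x| <= M.
Definition convex_op (T : X -> X) := forall (l : R) x y, 0 <= l <= 1 ->
  T (l *: x + (1 - l) *: y) <=L l *: T x + (1 - l) *: T y.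
Definition monotone_op (T : X -> X) := forall x y, x <=L y -> T x <=L T y.
Definition poshom_op (T : X -> X) := forall (l : R) x, 0 < l -> T (l *: x) = l *: T x.
Definition sublinear_op (T : X -> X) := convex_op T /\ poshom_op T.

(* semigroups: families S : R -> X -> X, only t >= 0 matters *)
Definition semigroup (S : R -> X -> X) :=
  (forall t, 0 <= t -> bounded_op (S t)) /\ (forall x, S 0 x = x) /\
  (forall t s x, 0 <= t -> 0 <= s -> S (t + s) x = S t (S s x)).
Definition C0_semigroup (S : R -> X -> X) :=
  semigroup S /\ forall x, (fun t => S t x) @ 0^'+ --> x.
Definition convex_sg (S : R -> X -> X) := forall t, 0 <= t -> convex_op (S t).
Definition monotone_sg (S : R -> X -> X) := forall t, 0 <= t -> monotone_op (S t).
Definition sublinear_sg (S : R -> X -> X) := forall t, 0 <= t -> sublinear_op (S t).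
Definition sg_le (S T : R -> X -> X) := forall t x, 0 <= t -> S t x <=L T t x.

Definition is_upper_bound {Lam : Type} (Sl : Lam -> R -> X -> X) (S : R -> X -> X) :=
  semigroup S /\ forall l, sg_le (Sl l) S.
Definition is_envelope {Lam : Type} (Sl : Lam -> R -> X -> X) (S : R -> X -> X) :=
  is_upper_bound Sl S /\ forall T, is_upper_bound Sl T -> sg_le S T.

Definition Jop {Lam : Type} (Sl : Lam -> R -> X -> X) (h : R) (x : X) : X :=
  if h == 0 then x else lsup [set Sl l h x | l in [set: Lam]].

(* A partition pi = {0 = t_0 < t_1 < ... < t_m} in P is encoded by the
   sequence [:: t_1; ...; t_m] (strictly increasing, all > 0).
   J_pi x = J_{t1 - t0} ... J_{tm - t(m-1)} x. *)
Fixpoint Jseq {Lam : Type} (Sl : Lam -> R -> X -> X) (prev : R) (s : seq R) (x : X) : X :=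
  match s with
  | [::] => x
  | t :: s' => Jop Sl (t - prev) (Jseq Sl t s' x)
  end.
Definition Jpart {Lam : Type} (Sl : Lam -> R -> X -> X) (s : seq R) (x : X) : X :=
  Jseq Sl 0 s x.
Definition in_Pt (t : R) (s : seq R) := sorted <%R (0 :: s) /\ last 0 s = t.

End BL.

(* Main.v *)
Set Warnings "-notation-overridden,-ambiguous-paths,-notation-incompatible-prefix".
Set Implicit Arguments. Unset Strict Implicit. Unset Printing Implicit Defensive.
Require Import Defs.
From HB Require Import structures.
From mathcomp Require Import all_boot all_order all_algebra.
From mathcomp Require Import all_classical all_reals all_analysis.
From mathcomp Require Import ring lra.
Import Order.TTheory GRing.Theory Num.Theory.
Import numFieldNormedType.Exports.
Local Open Scope classical_set_scope.
Local Open Scope ring_scope.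
Ltac sg := match goal with |- ?g => idtac g end.
Section Lat.
Context {R : realType} {X : completeNormedModType R} (L : banach_lattice X).
Local Notation "x <=L y" := (ble L x y) (at level 70).
Local Notation bj := (bjoin L).

Lemma lrefl x : x <=L x. Proof. exact: ble_refl. Qed.
Lemma ltr x y z : x <=L y -> y <=L z -> x <=L z. Proof. exact: ble_trans. Qed.
Lemma laddr x y z : x <=L y -> x + z <=L y + z. Proof. exact: ble_add. Qed.
Lemma laddl x y z : x <=L y -> z + x <=L z + y.
Proof. by move=> h; rewrite ![z + _]addrC; apply: laddr. Qed.
Lemma ladd2 a b c d : a <=L b -> c <=L d -> a + c <=L b + d.
Proof. by move=> h1 h2; apply: ltr (laddr _ h1) (laddl _ h2). Qed.
Lemma lsub0 x y : x <=L y <-> 0 <=L y - x.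
Proof.
split=> h; first by rewrite -(subrr x); apply: laddr.
by have := laddr x h; rewrite add0r subrK.
Qed.
Lemma lopp x y : x <=L y -> - y <=L - x.
Proof.
move=> h; have := laddr (- x - y) h.
by rewrite addrA subrr add0r addrCA subrr addr0.
Qed.
Lemma lscale (a : R) x y : 0 <= a -> x <=L y -> a *: x <=L a *: y.
Proof. exact: ble_scale. Qed.

Definition labs x := bj x (- x).
Lemma labs_ge0 x : 0 <=L labs x.
Proof.
have h := ladd2 (bjoin_ubl L x (- x)) (bjoin_ubr L x (- x)).
rewrite subrr in h.
have h2 : (0:R) <= 2^-1 by rewrite invr_ge0 ler0n.
have := lscale h2 h.
rewrite scaler0 scalerDr -scalerDl.
have -> : (2^-1 + 2^-1 : R) = 1 by field.
by rewrite scale1r.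
Qed.
Lemma labs_ge x : x <=L labs x. Proof. exact: bjoin_ubl. Qed.
Lemma labs_geN x : - x <=L labs x. Proof. exact: bjoin_ubr. Qed.

Lemma norm_mono0 a b : 0 <=L a -> a <=L b -> `|a| <= `|b|.
Proof.
move=> a0 ab; apply: bnorm_mono; apply: bjoin_least.
  exact: (ltr ab (labs_ge b)).
apply: (ltr _ (ltr a0 (ltr ab (labs_ge b)))).
by have := lopp a0; rewrite oppr0.
Qed.
Lemma norm_labs a : `|labs a| <= `|a|.
Proof.
apply: bnorm_mono; apply: bjoin_least; first exact: lrefl.
apply: (ltr _ (labs_ge0 a)); by have := lopp (labs_ge0 a); rewrite oppr0.
Qed.
Lemma norm_sandwich a b c : a <=L b -> b <=L c -> `|b| <= `|a| + `|c|.
Proof.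
move=> ab bc.
have ha := labs_ge0 a; have hc := labs_ge0 c.
have h : `|b| <= `|labs a + labs c|.
  apply: bnorm_mono; apply: bjoin_least.
    apply: ltr bc _; apply: ltr (labs_ge c) _; apply: ltr (labs_ge _).
    by have := laddr (labs c) ha; rewrite add0r.
  apply: ltr (lopp ab) _; apply: ltr (labs_geN a) _; apply: ltr (labs_ge _).
  by have := laddl (labs a) hc; rewrite addr0.
apply: le_trans h _; apply: le_trans (ler_normD _ _) _.
by apply: lerD; apply: norm_labs.
Qed.

Lemma approx p q : (forall e : R, 0 < e -> exists d, `|d| < e /\ p <=L q + d) ->
  p <=L q.
Proof.
move=> H; set z := bj (p - q) 0.
have z0 : 0 <=L z by apply: bjoin_ubr.
have nz : `|z| = 0.
  apply/eqP; rewrite eq_le normr_ge0 andbT leNgt; apply/negP => zp.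
  have [d [dn hd]] := H _ zp.
  have : z <=L labs d.
    apply: bjoin_least; last exact: labs_ge0.
    apply: ltr (labs_ge d); have := laddr (- q) hd.
    by rewrite addrAC subrr add0r.
  move=> /(norm_mono0 z0) h1; have := le_trans h1 (norm_labs d).
  by move=> h2; have := lt_le_trans dn h2; rewrite ltxx.
have z00 : z = 0 by apply/eqP; rewrite -normr_eq0 nz.
apply/lsub0; have := lopp (bjoin_ubl L (p - q) 0); rewrite -/z z00 oppr0 opprB.
by [].
Qed.
End Lat.
Section DC.
Context {R : realType} {X : completeNormedModType R} (L : banach_lattice X).
Local Notation "x <=L y" := (ble L x y) (at level 70).
Local Notation bj := (bjoin L).

Lemma archi u w : (forall n : nat, (n%:R : R) *: u <=L w) -> u <=L 0.
Proof.
move=> H; apply: approx => e e0.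
have w0 : 0 <=L w by have := H 0%N; rewrite scale0r.
set n := (Num.Def.archi_bound (`|w| / e)).+1.
have n0 : (0 : R) < n%:R by rewrite ltr0n.
exists (n%:R^-1 *: w); split.
  rewrite normrZ ger0_norm ?invr_ge0 ?ltW //.
  rewrite mulrC ltr_pdivrMr // mulrC -ltr_pdivrMr //.
  have we : 0 <= `|w| / e by rewrite divr_ge0 // ltW.
  apply: (lt_le_trans (archi_boundP we)).
  by rewrite ler_nat.
have ni : (0:R) <= n%:R^-1 by rewrite invr_ge0 ltW.
rewrite add0r; have := lscale ni (H n).
by rewrite scalerA mulVf ?scale1r // gt_eqF.
Qed.

Lemma dc_dir (oc : order_continuous L) (A : set X) a0 y0 :
  A a0 -> is_ub L A y0 -> (forall a b, A a -> A b -> A (bj a b)) ->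
  exists s, is_sup L A s.
Proof.
move=> Aa0 uy0 Aj.
pose I := {p : X * X | is_ub L A p.1 /\ A p.2}.
pose ileq (i j : I) := (sval j).1 <=L (sval i).1 /\ (sval i).2 <=L (sval j).2.
pose x (i : I) := (sval i).1 - (sval i).2.
have key : forall e : R, 0 < e -> exists i0 : I, forall i, ileq i0 i -> `|x i| < e.
  apply: (oc _ ileq x).
  - by move=> i; split; apply: lrefl.
  - by move=> i j k [h1 h2] [h3 h4]; split; [apply: (ltr h3 h1)|apply: (ltr h2 h4)].
  - by constructor; exists (y0, a0).
  - move=> [[y a] [uy Aa]] [[y' a'] [uy' Aa']].
    have um : is_ub L A (- bj (- y) (- y')).
      move=> b Ab; have := lopp (bjoin_least (lopp (uy b Ab)) (lopp (uy' b Ab))).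
      by rewrite opprK.
    exists (exist _ (- bj (- y) (- y'), bj a a') (conj um (Aj _ _ Aa Aa'))).
    split; split => /=; try apply: bjoin_ubl; try apply: bjoin_ubr.
      by have := lopp (bjoin_ubl L (- y) (- y')); rewrite opprK.
    by have := lopp (bjoin_ubr L (- y) (- y')); rewrite opprK.
  - move=> [[y a] [uy Aa]] [[y' a'] [uy' Aa']] [/= h1 h2]; rewrite /x /=.
    exact: ladd2 h1 (lopp h2).
  - split.
      by move=> _ [[[y a] [uy Aa]] _ <-]; rewrite /x /=; have := uy a Aa; move/lsub0.
    move=> u hu.
    have hn : forall n : nat, is_ub L A (y0 - n%:R *: u).
      elim=> [|n IH]; first by rewrite scale0r subr0.
      move=> b Ab; have := hu _ (ex_intro2 _ _ (exist _ (_, b) (conj IH Ab)) Logic.I erefl).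
      rewrite /x /= => h; have := laddr (b - u) h.
      rewrite [u + _]addrC subrK addrA subrK -natr1 scalerDl scale1r opprD addrA.
      by [].
    apply: archi (y0 - a0) _ => n; apply/lsub0.
    have := (hn n a0 Aa0); move/lsub0.
    by rewrite addrAC.
have tail_sub : forall a b, A a -> A b -> exists2 k, A k &
   ([set c | A c /\ k <=L c] `<=` [set c | A c /\ a <=L c] `&` [set c | A c /\ b <=L c]).
  move=> a b Aa Ab; exists (bj a b); first exact: Aj.
  move=> c [Ac hc]; split; split=> //; apply: ltr hc; [exact: bjoin_ubl|exact: bjoin_ubr].
pose F := filter_from A (fun a => [set c | A c /\ a <=L c]).
have FF : Filter F by apply: filter_from_filter; [exists a0| exact: tail_sub].
have PF : ProperFilter F.
  by apply: filter_from_proper => a Aa; exists a; split=> //; apply: lrefl.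
have cF : cauchy F.
  apply/cauchy_ballP => e e0.
  have e2 : 0 < e / 2 by rewrite divr_gt0.
  have [[[y1 a1] [uy1 Aa1]] hi] := key _ e2.
  have hb : forall b, A b -> a1 <=L b -> `|y1 - b| < e / 2.
    move=> b Ab hb; apply: (hi (exist _ (y1, b) (conj uy1 Ab))).
    by split=> //=; apply: lrefl.
  exists ([set c | A c /\ a1 <=L c], [set c | A c /\ a1 <=L c]).
    by split; exists a1.
  move=> [b c] /= [[Ab hb1] [Ac hc1]].
  rewrite -ball_normE /ball_ /=.
  have -> : b - c = (y1 - c) - (y1 - b) by rewrite opprB [RHS]addrC addrA subrK.
  apply: (le_lt_trans (ler_normB _ _)).
  by rewrite (splitr e); apply: ltrD; apply: hb.
have Fs : F --> lim F by apply: (proj1 (@cauchy_cvgP _ F PF) cF).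
set s := lim F.
exists s; split.
  move=> a Aa; apply: approx => e e0.
  have [a1 Aa1 sub] := fcvg_ball Fs e0.
  have Bb := sub (bj a a1) (conj (Aj _ _ Aa Aa1) (bjoin_ubr L a a1)).
  exists (bj a a1 - s); split.
    by move: Bb; rewrite -ball_normE /ball_ /= -opprB normrN.
  by rewrite addrC subrK; apply: bjoin_ubl.
move=> u hu; apply: approx => e e0.
have [a1 Aa1 sub] := fcvg_ball Fs e0.
have Bb := sub a1 (conj Aa1 (lrefl L a1)).
exists (s - a1); split.
  by move: Bb; rewrite -ball_normE /ball_ /=.
have := laddr (s - a1) (hu _ Aa1).
by rewrite addrC subrK.
Qed.
End DC.
Section DC2.
Context {R : realType} {X : completeNormedModType R} (L : banach_lattice X).
Local Notation "x <=L y" := (ble L x y) (at level 70).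
Local Notation bj := (bjoin L).

Inductive jcl (A : set X) : X -> Prop :=
| jcl_in a : A a -> jcl A a
| jcl_j a b : jcl A a -> jcl A b -> jcl A (bj a b).

Lemma dc (oc : order_continuous L) (A : set X) :
  (exists a, A a) -> bounded_above L A -> exists s, is_sup L A s.
Proof.
move=> [a0 Aa0] [y0 uy0].
have ubj : forall y, is_ub L A y -> is_ub L (jcl A) y.
  move=> y uy c; elim=> [a Aa|a b _ ha _ hb]; first exact: uy.
  exact: bjoin_least.
have [s [us ls]] := dc_dir oc (jcl_in Aa0) (ubj _ uy0) (@jcl_j A).
exists s; split.
  by move=> a Aa; apply: us; apply: jcl_in.
by move=> u hu; apply: ls; apply: ubj.
Qed.

Lemma lsupE (A : set X) s : is_sup L A s -> lsup L A = s.
Proof.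
move=> hs; apply: xget_unique => // y [uy ly].
by apply: ble_anti; [apply: ly; case: hs|case: hs => _; apply].
Qed.

Lemma lsup_spec (oc : order_continuous L) (A : set X) :
  (exists a, A a) -> bounded_above L A -> is_sup L A (lsup L A).
Proof. by move=> h1 h2; have [s hs] := dc oc h1 h2; rewrite (lsupE hs). Qed.
End DC2.
Section CB.
Context {R : realType} {X : completeNormedModType R} (L : banach_lattice X).
Local Notation "x <=L y" := (ble L x y) (at level 70).

Lemma approach (oc : order_continuous L) (Y : set X) y : (exists a, Y a) ->
  (forall a b, Y a -> Y b -> exists c, [/\ Y c, a <=L c & b <=L c]) ->
  is_sup L Y y -> forall e : R, 0 < e -> exists a, Y a /\ `|y - a| < e.
Proof.
move=> [a0 Ya0] dir [uy ly] e e0.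
pose I := {a | Y a}.
pose ileq (i j : I) := sval i <=L sval j.
pose x (i : I) := y - sval i.
have [i0 hi0] : exists i0 : I, forall i, ileq i0 i -> `|x i| < e.
  apply: (oc I ileq x (fun i => lrefl L _) (fun i j k h1 h2 => ltr h1 h2)
    (inhabits (exist _ a0 Ya0))).
  - move=> [a Ya] [b Yb]; have [c [Yc ac bc]] := dir a b Ya Yb.
    by exists (exist _ c Yc).
  - by move=> [a Ya] [b Yb] h; rewrite /x /=; apply: laddl; apply: lopp.
  - split; first by move=> _ [[a Ya] _ <-]; rewrite /x /=; have := uy a Ya; move/lsub0.
    move=> u hu.
    have : is_ub L Y (y - u).
      move=> a Ya; have := laddr (a - u) (hu _ (ex_intro2 _ _ (exist _ a Ya) Logic.I erefl)).
      by rewrite /x /= [u + _]addrC subrK addrA subrK.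
    move/ly => h; have := laddr (u - y) h.
    by rewrite [y + _]addrC subrK addrA subrK subrr.
  - exact: e0.
by exists (sval i0); split; [exact: (svalP i0)|apply: hi0; apply: lrefl].
Qed.

Lemma cont_below (oc : order_continuous L) (T : X -> X) :
  convex_op L T -> bounded_op T -> forall (Y : set X) y u, (exists a, Y a) ->
  (forall a b, Y a -> Y b -> exists c, [/\ Y c, a <=L c & b <=L c]) ->
  is_sup L Y y -> (forall a, Y a -> T a <=L u) -> T y <=L u.
Proof.
move=> cT bT Y y u ne dir sy hu.
have r0 : (0 : R) < `|y| + 2 by apply: ltr_wpDl.
have [M hM] := bT _ r0.
have M0 : 0 <= M.
  apply: le_trans (hM 0 _); first exact: normr_ge0.
  by rewrite normr0 ltW.
apply: approx => e e0.
pose d := e / (2 * (M + e)).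
have Me : 0 < 2 * (M + e) by rewrite mulr_gt0 // ltr_wpDl.
have d0 : 0 < d by rewrite divr_gt0.
have d1 : d < 1 by rewrite ltr_pdivrMr // mul1r; rewrite mulrDr mulrDl; lra.
have dM : d * (M + M) < e.
  rewrite mulrC mulrA ltr_pdivrMr // mulrC ltr_pM2l //; lra.
have dd0 : 0 < d * d by rewrite mulr_gt0.
have [a [Ya ya]] := approach oc ne dir sy dd0.
pose w := a + d^-1 *: (y - a).
have yE : (1 - d) *: a + (1 - (1 - d)) *: w = y.
  have -> : 1 - (1 - d) = d by rewrite opprB addrC subrK.
  rewrite /w scalerDr scalerA mulfV ?gt_eqF // scale1r scalerBl scale1r.
  by rewrite addrA subrK addrC subrK.
have hd : 0 <= 1 - d <= 1 by rewrite subr_ge0 ltW //= lerBlDr lerDl ltW.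
have hc := cT (1 - d) a w hd; rewrite yE in hc.
exists (d *: (T w - T a)); split.
  have na : `|a| <= `|y| + 2.
    have -> : a = y - (y - a) by rewrite opprB addrC subrK.
    apply: le_trans (ler_normB _ _) _; apply: lerD => //.
    apply: ltW; apply: (lt_trans ya).
    have : d * d < 1 by rewrite -[1]mulr1; apply: ltr_pM => //; apply: ltW.
    lra.
  have nw : `|w| <= `|y| + 2.
    apply: le_trans (ler_normD _ _) _.
    rewrite normrZ ger0_norm ?invr_ge0 ?ltW //.
    have h1 : `|a| <= `|y| + d * d.
      have -> : a = y - (y - a) by rewrite opprB addrC subrK.
      by apply: le_trans (ler_normB _ _) _; apply: lerD => //; apply: ltW.
    have h2 : d^-1 * `|y - a| <= d.
      rewrite ler_pdivrMl // ; apply: ltW; by [].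
    have h3 : d * d + d < 2 by nra.
    apply: le_lt_trans (lerD h1 h2) _; rewrite -addrA ltrD2l //.
  rewrite normrZ ger0_norm ?ltW //; apply: le_lt_trans dM.
  rewrite ler_pM2l //; apply: le_trans (ler_normB _ _) _.
  by apply: lerD; apply: hM.
apply: (ltr hc).
have -> : (1 - d) *: T a + (1 - (1 - d)) *: T w = T a + d *: (T w - T a).
  have -> : 1 - (1 - d) = d by rewrite opprB addrC subrK.
  by rewrite scalerBl scale1r scalerBr addrAC [RHS]addrA.
by apply: laddr; apply: hu.
Qed.
End CB.
Section J.
Context {R : realType} {X : completeNormedModType R} (L : banach_lattice X).
Local Notation "x <=L y" := (ble L x y) (at level 70).
Context {Lam : Type} (Sl : Lam -> R -> X -> X).
Context (oc : order_continuous L) (inh : inhabited Lam)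
  (hS : forall l, semigroup (Sl l) /\ convex_sg L (Sl l) /\ monotone_sg L (Sl l))
  (hb : forall x t, 0 < t -> bounded_above L [set Sl l t x | l in [set: Lam]]).

Local Notation J := (Jop L Sl).

Lemma Sl0 l z : Sl l 0 z = z. Proof. by case: (hS l) => [[_ [h _]] _]. Qed.
Lemma SlD l a b z : 0 <= a -> 0 <= b -> Sl l (a + b) z = Sl l a (Sl l b z).
Proof. by case: (hS l) => [[_ [_ h]] _]; apply: h. Qed.
Lemma Slmono l h : 0 <= h -> monotone_op L (Sl l h).
Proof. by case: (hS l) => [_ [_ h']]; apply: h'. Qed.
Lemma Slconv l h : 0 <= h -> convex_op L (Sl l h).
Proof. by case: (hS l) => [_ [h' _]]; apply: h'. Qed.

Lemma Jsup h z : 0 <= h -> is_sup L [set Sl l h z | l in [set: Lam]] (J h z).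
Proof.
rewrite le_eqVlt => /orP [/eqP h0|hp].
  rewrite -h0 /Jop eqxx; split.
    by move=> _ [l _ <-]; rewrite Sl0; apply: lrefl.
  by move=> u hu; case: inh => l; apply: hu; exists l => //; rewrite Sl0.
rewrite /Jop gt_eqF //; apply: lsup_spec => //.
  by case: inh => l; exists (Sl l h z); exists l.
exact: hb.
Qed.

Lemma Jub l h z : 0 <= h -> Sl l h z <=L J h z.
Proof. by move=> h0; case: (Jsup z h0) => + _; apply; exists l. Qed.
Lemma Jleast h z u : 0 <= h -> (forall l, Sl l h z <=L u) -> J h z <=L u.
Proof. by move=> h0 H; case: (Jsup z h0) => _; apply => _ [l _ <-]. Qed.
Lemma J0 z : J 0 z = z. Proof. by rewrite /Jop eqxx. Qed.

Lemma Jmono h : 0 <= h -> monotone_op L (J h).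
Proof.
move=> h0 x y xy; apply: Jleast => // l.
exact: (ltr (Slmono l h0 xy) (Jub l y h0)).
Qed.

Lemma Jconv h : 0 <= h -> convex_op L (J h).
Proof.
move=> h0 a x y /andP [a0 a1]; apply: Jleast => // l.
have H : 0 <= a <= 1 by rewrite a0 a1.
apply: (ltr (Slconv l h0 x y H)).
apply: ladd2; apply: lscale; rewrite ?subr_ge0 //; exact: (Jub l _ h0).
Qed.

Lemma JD a b z : 0 <= a -> 0 <= b -> J (a + b) z <=L J a (J b z).
Proof.
move=> a0 b0; apply: Jleast; first exact: addr_ge0.
move=> l; rewrite SlD //; apply: (ltr (Slmono l a0 (Jub l z b0))).
exact: Jub.
Qed.
Definition Jinc (hs : seq R) z := foldr (fun h y => J h y) z hs.
Definition pos (hs : seq R) := all (fun h => 0 < h) hs.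
Definition Inc t hs := pos hs /\ \sum_(h <- hs) h = t.

Lemma Jinc_cons h hs z : Jinc (h :: hs) z = J h (Jinc hs z). Proof. by []. Qed.
Lemma Jinc_cat hs1 hs2 z : Jinc (hs1 ++ hs2) z = Jinc hs1 (Jinc hs2 z).
Proof. by rewrite /Jinc foldr_cat. Qed.
Lemma pos_cons h hs : pos (h :: hs) = (0 < h) && pos hs. Proof. by []. Qed.

Lemma sum_ge0 hs : pos hs -> 0 <= \sum_(h <- hs) h.
Proof.
elim: hs => [|h hs IH]; first by rewrite big_nil.
by rewrite pos_cons big_cons => /andP [h0 /IH]; apply: addr_ge0; apply: ltW.
Qed.

Lemma Jinc_mono hs : pos hs -> monotone_op L (Jinc hs).
Proof.
elim: hs => [|h hs IH]; first by move=> _ x y.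
move=> /andP [h0 /IH hm] x y xy.
exact: (Jmono (ltW h0) (hm _ _ xy)).
Qed.

Lemma Jinc_conv hs : pos hs -> convex_op L (Jinc hs).
Proof.
elim: hs => [|h hs IH] /=; first by move=> _ a x y _; apply: lrefl.
move=> /andP [h0 hp] a x y ha.
have hm := Jinc_mono hp.
apply: ltr (Jmono (ltW h0) (IH hp a x y ha)) _.
exact: Jconv (ltW h0) _ _ _ ha.
Qed.

Lemma Jmerge hs z : pos hs -> J (\sum_(h <- hs) h) z <=L Jinc hs z.
Proof.
elim: hs z => [|h hs IH] z; first by rewrite big_nil J0; move=> _; apply: lrefl.
rewrite pos_cons big_cons => /andP [h0 hp].
apply: ltr (JD _ (ltW h0) (sum_ge0 hp)) _.
exact: Jmono (ltW h0) _ _ (IH _ hp).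
Qed.

Lemma Sl_le_Jinc l hs z : pos hs -> Sl l (\sum_(h <- hs) h) z <=L Jinc hs z.
Proof.
elim: hs z => [|h hs IH] z; first by rewrite big_nil Sl0; move=> _; apply: lrefl.
rewrite pos_cons big_cons => /andP [h0 hp].
rewrite SlD ?(ltW h0) ?sum_ge0 //.
apply: ltr (Slmono l (ltW h0) (IH z hp)) _.
exact: (Jub l _ (ltW h0)).
Qed.

Lemma Jsplit hs t s : pos hs -> 0 <= t -> 0 <= s -> \sum_(h <- hs) h = t + s ->
  exists hs1 hs2, [/\ Inc t hs1, Inc s hs2 &
    forall z, Jinc hs z <=L Jinc hs1 (Jinc hs2 z)].
Proof.
elim: hs t => [|h hs IH] t hp t0 s0.
  rewrite big_nil => /esym/eqP; rewrite paddr_eq0 // => /andP [/eqP -> /eqP ->].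
  by exists [::], [::]; split; rewrite /Inc ?big_nil //; move=> z; apply: lrefl.
move: hp; rewrite pos_cons big_cons => /andP [h0 hp] hsum.
have [/eqP t00|tn0] := boolP (t == 0).
  exists [::], (h :: hs); split.
  - by rewrite /Inc big_nil.
  - by split; [rewrite pos_cons h0 hp | rewrite big_cons hsum t00 add0r].
  - by move=> z; apply: lrefl.
have tp : 0 < t by rewrite lt_neqAle eq_sym tn0.
have [ht|ht] := leP h t.
  have th : 0 <= t - h by rewrite subr_ge0.
  have e : \sum_(h0 <- hs) h0 = t - h + s by rewrite addrAC -hsum addrC addKr.
  have [hs1 [hs2 [[p1 e1] i2 hz]]] := IH (t - h) hp th s0 e.
  exists (h :: hs1), hs2; split => //.
    by split; rewrite ?pos_cons ?h0 ?p1 // big_cons e1 addrC subrK.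
  by move=> z /=; apply: Jmono (ltW h0) _ _ (hz z).
exists [:: t], (h - t :: hs); split.
- by split; rewrite /= ?tp // big_cons big_nil addr0.
- split; first by rewrite pos_cons subr_gt0 ht hp.
  by rewrite big_cons addrAC hsum [t + s]addrC addrK.
move=> z /=; have htt : 0 <= h - t by rewrite subr_ge0 ltW.
by have := JD (Jinc hs z) (ltW tp) htt; rewrite addrC subrK.
Qed.

Lemma pos_sum0 hs : pos hs -> \sum_(h <- hs) h = 0 -> hs = [::].
Proof.
case: hs => // h hs; rewrite pos_cons big_cons => /andP [h0 hp] e.
have s0 := sum_ge0 hp.
have : 0 < h + \sum_(i <- hs) i by apply: (lt_le_trans h0); rewrite lerDl.
by rewrite e ltxx.
Qed.

Lemma Inc_cat t1 t2 hs1 hs2 : Inc t1 hs1 -> Inc t2 hs2 -> Inc (t1 + t2) (hs1 ++ hs2).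
Proof.
move=> [p1 e1] [p2 e2]; split; last by rewrite big_cat e1 e2.
by move: p1 p2; rewrite /pos all_cat => -> ->.
Qed.

Lemma Jrefine t hs hs' : Inc t hs -> Inc t hs' ->
  exists hs'', Inc t hs'' /\
    forall z, Jinc hs z <=L Jinc hs'' z /\ Jinc hs' z <=L Jinc hs'' z.
Proof.
elim: hs' t hs => [|h' rest IH] t hs [p e] [p' e'].
  move: e'; rewrite big_nil => t0; rewrite -t0 in e.
  rewrite (pos_sum0 p e); exists [::]; split; first by split; rewrite ?big_nil.
  by move=> z; split; apply: lrefl.
move: p'; rewrite pos_cons => /andP [h0 pr].
move: e'; rewrite big_cons => e'.
have [hs1 [hs2 [[p1 e1] i2 hz]]] := Jsplit p (ltW h0) (sum_ge0 pr) (etrans e (esym e')).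
have [hs3 [i3 hz3]] := IH _ hs2 i2 (conj pr erefl).
exists (hs1 ++ hs3); split.
  by rewrite -e'; apply: Inc_cat => //; split.
move=> z; rewrite Jinc_cat; split.
  apply: ltr (hz z) _; apply: (Jinc_mono p1); exact: (proj1 (hz3 z)).
rewrite Jinc_cons; apply: ltr (Jmono (ltW h0) (proj2 (hz3 z))) _.
by rewrite -e1; apply: Jmerge.
Qed.

Lemma Jinc_le_T (T : R -> X -> X) : semigroup T -> (forall l, sg_le L (Sl l) T) ->
  forall hs z, pos hs -> Jinc hs z <=L T (\sum_(h <- hs) h) z.
Proof.
move=> [_ [T0 TD]] hT; elim=> [|h hs IH] z; first by rewrite big_nil T0; move=> _; apply: lrefl.
rewrite pos_cons big_cons => /andP [h0 hp]; rewrite TD ?(ltW h0) ?sum_ge0 //=.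
apply: Jleast (ltW h0) _ => l.
apply: ltr (Slmono l (ltW h0) (IH z hp)) _.
exact: hT (ltW h0).
Qed.

Lemma E1g s prev : sorted <%R (prev :: s) ->
  exists hs, [/\ pos hs, \sum_(h <- hs) h = last prev s - prev &
    forall z, Jseq L Sl prev s z = Jinc hs z].
Proof.
elim: s prev => [|a s IH] prev /=.
  by move=> _; exists [::]; split; rewrite ?big_nil ?subrr.
move=> /andP [pa ps]; have [hs [p e hz]] := IH a ps.
exists (a - prev :: hs); split.
- by rewrite pos_cons subr_gt0 pa p.
- by rewrite big_cons e addrC addrA subrK.
by move=> z /=; rewrite hz.
Qed.

Lemma E2g hs prev : pos hs ->
  exists s, [/\ sorted <%R (prev :: s), last prev s = prev + \sum_(h <- hs) h &
    forall z, Jseq L Sl prev s z = Jinc hs z].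
Proof.
elim: hs prev => [|h hs IH] prev.
  by move=> _; exists [::]; split; rewrite ?big_nil ?addr0.
rewrite pos_cons => /andP [h0 hp]; have [s [ss ls hz]] := IH (prev + h) hp.
exists (prev + h :: s); split.
- by rewrite /= ltrDl h0.
- by rewrite /= ls big_cons addrA.
by move=> z /=; rewrite hz [prev + h]addrC addrK.
Qed.

Lemma Pt_eq t x : [set Jpart L Sl s x | s in in_Pt t] = [set Jinc hs x | hs in Inc t].
Proof.
apply/seteqP; split => _ [s hs <-].
  case: hs => ss ls; have [hs [p e hz]] := E1g ss.
  by exists hs; [split => //; rewrite e ls subr0|rewrite /Jpart hz].
case: hs => p e; have [s' [ss ls hz]] := E2g 0 p.
by exists s'; [split => //; rewrite ls add0r|rewrite /Jpart hz].
Qed.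

Lemma sup_unique (A : set X) s s' : is_sup L A s -> is_sup L A s' -> s = s'.
Proof. by move=> [u1 l1] [u2 l2]; apply: ble_anti; [apply: l1|apply: l2]. Qed.

Lemma sandwich_bounded (T A B : X -> X) : bounded_op A -> bounded_op B ->
  (forall x, A x <=L T x) -> (forall x, T x <=L B x) -> bounded_op T.
Proof.
move=> bA bB hA hB r r0; have [M1 h1] := bA r r0; have [M2 h2] := bB r r0.
exists (M1 + M2) => x xr; apply: le_trans (norm_sandwich (hA x) (hB x)) _.
by apply: lerD; [apply: h1|apply: h2].
Qed.

Context (C : R -> X -> X)
  (hC : forall t, 0 <= t -> bounded_op (C t) /\
     forall s x, in_Pt t s -> ble L (Jpart L Sl s x) (C t x)).

Definition Dset t x := [set Jinc hs x | hs in Inc t].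
Definition Sg t x := lsup L (Dset t x).

Lemma Inc0 hs : Inc 0 hs -> hs = [::].
Proof. by case=> p e; apply: pos_sum0. Qed.

Lemma Inc1 t : 0 < t -> Inc t [:: t].
Proof. by move=> t0; split; rewrite /= ?t0 // big_cons big_nil addr0. Qed.

Lemma Dne t x : 0 <= t -> exists a, Dset t x a.
Proof.
rewrite le_eqVlt => /orP [/eqP <-|tp].
  by exists x; exists [::] => //; split; rewrite ?big_nil.
by exists (Jinc [:: t] x); exists [:: t] => //; apply: Inc1.
Qed.

Lemma Dub t x : 0 <= t -> is_ub L (Dset t x) (C t x).
Proof.
move=> t0 _ [hs [p e] <-]; have [s [ss ls hz]] := E2g 0 p.
rewrite -hz; apply: (proj2 (hC t0)); split => //; by rewrite ls add0r.
Qed.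

Lemma Ssup t x : 0 <= t -> is_sup L (Dset t x) (Sg t x).
Proof.
move=> t0; apply: lsup_spec => //; first exact: Dne.
by exists (C t x); apply: Dub.
Qed.

Lemma Jinc_le_S t hs x : Inc t hs -> Jinc hs x <=L Sg t x.
Proof.
move=> hi; have t0 : 0 <= t by case: hi => p <-; apply: sum_ge0.
by case: (Ssup x t0) => + _; apply; exists hs.
Qed.

Lemma S_le t x u : 0 <= t -> (forall hs, Inc t hs -> Jinc hs x <=L u) -> Sg t x <=L u.
Proof. by move=> t0 H; case: (Ssup x t0) => _; apply => _ [hs hi <-]; apply: H. Qed.

Lemma Sdir t x : forall a b, Dset t x a -> Dset t x b ->
  exists c, [/\ Dset t x c, a <=L c & b <=L c].
Proof.
move=> _ _ [hs hi <-] [hs' hi' <-]; have [hs'' [hi'' hz]] := Jrefine hi hi'.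
by exists (Jinc hs'' x); split; [exists hs''|exact: (proj1 (hz x))|exact: (proj2 (hz x))].
Qed.

Lemma S0 x : Sg 0 x = x.
Proof.
apply: lsupE; split; first by move=> _ [hs /Inc0 -> <-]; apply: lrefl.
by move=> u hu; apply: (hu x); exists [::] => //; split; rewrite ?big_nil.
Qed.

Lemma Sl_le_S l t x : 0 <= t -> Sl l t x <=L Sg t x.
Proof.
rewrite le_eqVlt => /orP [/eqP <-|tp]; first by rewrite Sl0 S0; apply: lrefl.
apply: ltr _ (Jinc_le_S x (Inc1 tp)).
have := Sl_le_Jinc l x (proj1 (Inc1 tp)).
by rewrite big_cons big_nil addr0.
Qed.

Lemma S_le_C t x : 0 <= t -> Sg t x <=L C t x.
Proof. by move=> t0; apply: S_le => // hs hi; apply: (Dub t0); exists hs. Qed.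

Lemma Sl_bounded l t : 0 <= t -> bounded_op (Sl l t).
Proof. by case: (hS l) => [[h _] _]; apply: h. Qed.

Lemma S_bounded t : 0 <= t -> bounded_op (Sg t).
Proof.
move=> t0; case: inh => l.
apply: (sandwich_bounded (Sl_bounded l t0) (proj1 (hC t0))).
  by move=> x; apply: Sl_le_S.
by move=> x; apply: S_le_C.
Qed.

Lemma Jinc_bounded t hs : Inc t hs -> bounded_op (Jinc hs).
Proof.
move=> hi; have t0 : 0 <= t by case: hi => p <-; apply: sum_ge0.
case: inh => l.
apply: (sandwich_bounded (Sl_bounded l t0) (proj1 (hC t0))).
  by move=> x; case: hi => p e; rewrite -e; apply: Sl_le_Jinc.
by move=> x; apply: ltr (Jinc_le_S x hi) (S_le_C x t0).
Qed.

Lemma SD t s x : 0 <= t -> 0 <= s -> Sg (t + s) x = Sg t (Sg s x).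
Proof.
move=> t0 s0; apply: ble_anti.
  apply: S_le; first exact: addr_ge0.
  move=> hs [p e]; have [hs1 [hs2 [i1 i2 hz]]] := Jsplit p t0 s0 e.
  apply: ltr (hz x) _; apply: ltr _ (Jinc_le_S _ i1).
  exact: (Jinc_mono (proj1 i1) (Jinc_le_S x i2)).
apply: S_le => // hs1 i1.
apply: (cont_below oc (Jinc_conv (proj1 i1)) (Jinc_bounded i1) (Dne x s0) (@Sdir s x) (Ssup x s0)).
move=> _ [hs2 i2 <-]; rewrite -Jinc_cat; apply: Jinc_le_S.
exact: Inc_cat.
Qed.

Lemma S_semigroup : semigroup Sg.
Proof. split; first exact: S_bounded. by split; [exact: S0|move=> t s x t0 s0; exact: SD]. Qed.

Lemma S_conv : convex_sg L Sg.
Proof.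
move=> t t0 a x y ha; apply: S_le => // hs hi.
apply: ltr (Jinc_conv (proj1 hi) x y ha) _.
case/andP: ha => a0 a1.
by apply: ladd2; apply: lscale; rewrite ?subr_ge0 //; apply: Jinc_le_S.
Qed.

Lemma S_mono : monotone_sg L Sg.
Proof.
move=> t t0 x y xy; apply: S_le => // hs hi.
exact: ltr (Jinc_mono (proj1 hi) xy) (Jinc_le_S y hi).
Qed.

Lemma scale_inv a x u : 0 < a -> a *: x <=L u -> x <=L a^-1 *: u.
Proof.
move=> a0 h; have ai : 0 <= a^-1 by rewrite invr_ge0 ltW.
have := lscale ai h.
by rewrite scalerA mulVf ?gt_eqF // scale1r.
Qed.
Lemma scale_inv' a x u : 0 < a -> x <=L a^-1 *: u -> a *: x <=L u.
Proof.
move=> a0 h; have := lscale (ltW a0) h.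
by rewrite scalerA mulfV ?gt_eqF // scale1r.
Qed.

Section Sub.
Context (hsub : forall l, sublinear_sg L (Sl l)).

Lemma Jposhom h a z : 0 <= h -> 0 < a -> J h (a *: z) = a *: J h z.
Proof.
move=> h0 a0; apply: (sup_unique (Jsup (a *: z) h0)); split.
  move=> _ [l _ <-]; rewrite (proj2 (hsub l h0)) //.
  by apply: lscale (ltW a0) _; apply: Jub.
move=> u hu; apply: scale_inv' => //; apply: Jleast => // l.
apply: scale_inv => //; rewrite -(proj2 (hsub l h0)) //.
by apply: hu; exists l.
Qed.

Lemma Jinc_poshom hs a z : pos hs -> 0 < a -> Jinc hs (a *: z) = a *: Jinc hs z.
Proof.
elim: hs => [|h hs IH] //= /andP [h0 hp] a0.
by rewrite IH // Jposhom // ltW.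
Qed.

Lemma S_poshom t a x : 0 <= t -> 0 < a -> Sg t (a *: x) = a *: Sg t x.
Proof.
move=> t0 a0; apply: (sup_unique (Ssup (a *: x) t0)); split.
  move=> _ [hs hi <-]; rewrite Jinc_poshom //; last by case: hi.
  by apply: lscale (ltW a0) _; apply: Jinc_le_S.
move=> u hu; apply: scale_inv' => //; apply: S_le => // hs hi.
apply: scale_inv => //; rewrite -Jinc_poshom //; last by case: hi.
by apply: hu; exists hs.
Qed.
End Sub.

Lemma S_C0 : (forall x, (fun t => C t x) @ 0^'+ --> x) ->
  (exists l0, C0_semigroup (Sl l0)) -> C0_semigroup Sg.
Proof.
move=> hCc [l0 [_ hl0]]; split; first exact: S_semigroup.
move=> x; apply/cvgrPdist_lt => e e0.
have e2 : 0 < e / 2 by rewrite divr_gt0.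
have := hl0 x; move/cvgrPdist_lt => /(_ _ e2) h1.
have := hCc x; move/cvgrPdist_lt => /(_ _ e2) h2.
near=> t.
have tp : 0 < t by near: t; exact: nbhs_right_gt.
have a1 := Sl_le_S l0 x (ltW tp); have a2 := S_le_C x (ltW tp).
have := norm_sandwich (laddr (- x) a1) (laddr (- x) a2).
move=> hn; rewrite distrC; apply: le_lt_trans hn _.
rewrite (splitr e); apply: ltrD; rewrite distrC.
  by near: t.
by near: t.
Unshelve. all: by end_near.
Qed.
End J.

Theorem theorem4p2 (R : realType) (X : completeNormedModType R)
  (L : banach_lattice X) (Lam : Type) (Sl : Lam -> R -> X -> X) (C : R -> X -> X) :
  order_continuous L ->
  inhabited Lam ->
  (forall l, semigroup (Sl l) /\ convex_sg L (Sl l) /\ monotone_sg L (Sl l)) ->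
  (forall x t, 0 < t -> bounded_above L [set Sl l t x | l in [set: Lam]]) ->
  (forall t, 0 <= t -> bounded_op (C t) /\
     forall s x, in_Pt t s -> ble L (Jpart L Sl s x) (C t x)) ->
  exists S : R -> X -> X,
    [/\ is_envelope L Sl S,
        semigroup S /\ convex_sg L S /\ monotone_sg L S,
        (forall t x, 0 <= t ->
           is_sup L [set Jpart L Sl s x | s in in_Pt t] (S t x)),
        ((forall x, (fun t => C t x) @ 0^'+ --> x) ->
         (exists l0, C0_semigroup (Sl l0)) -> C0_semigroup S)
      & ((forall l, sublinear_sg L (Sl l)) -> sublinear_sg L S)].
Proof.
move=> oc inh hS hb hC.
have sg := S_semigroup oc inh hS hb hC.
exists (Sg L Sl); split.
- split.
    split; first exact: sg.
    by move=> l t x t0; apply: Sl_le_S; try eassumption.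
  move=> T [sT hT] t x t0; apply: S_le; try eassumption.
  by move=> hs [p e]; rewrite -e; apply: Jinc_le_T; try eassumption.
- split; first exact: sg.
  by split; [apply: S_conv|apply: S_mono]; try eassumption.
- by move=> t x t0; rewrite Pt_eq; apply: Ssup; try eassumption.
- by apply: S_C0; try eassumption.
move=> hsub t t0; split; first by apply: S_conv; try eassumption.
by move=> a x a0; apply: S_poshom; try eassumption.
Qed.
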